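(* Let $\phi:[0,1]\to\mathbb R$ be H\''older continuous with exponent $\gamma\in(0,1]$, $\phi(0)=\phi(1)$, and suppose $\phi$ is a valid base function for $b\in\{2,3,\dots\}$ and $\alpha\in(b^{-\gamma},1)$. If $0<\beta<b^{-\gamma}$, then $\psi(t):=\sum_{m=0}^\infty\beta^m\phi(\{b^mt\})$, $t\in[0,1]$, is also a valid base function for $b$ and $\alpha$.
   Context: $\{x\}$ denotes the fractional part of $x\ge0$. $U_1,U_2,\dots$ are i.i.d. uniform on $\{0,1,\dots,b-1\}$ and $R_m:=\sum_{i=1}^mU_ib^{i-1}$. Definition: a function $\phi:[0,1]\to\mathbb R$ that is H\''older continuous with exponent $\gamma\in(0,1]$ and satisfies $\phi(0)=\phi(1)$ is called a valid base function for $b$ and $\alpha$ (where $\alpha b^\gamma>1$, $\alpha<1$) if the random variable $Z:=\sum_{m=1}^\infty\alpha^{-m}\big(\phi((R_m+1)b^{-m})-\phi(R_mb^{-m})\big)$ is not almost surely equal to $0$. *)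

(* Defs.v *)
From HB Require Import structures.
From mathcomp Require Import all_boot all_order all_algebra.
From mathcomp Require Import all_classical all_reals all_analysis.
Set Implicit Arguments. Unset Strict Implicit. Unset Printing Implicit Defensive.
Import Order.TTheory GRing.Theory Num.Theory.
Import numFieldNormedType.Exports.
Local Open Scope classical_set_scope.
Local Open Scope ring_scope.

Section Defs.
Variable R : realType.

Definition frac (x : R) : R := x - (Num.floor x)%:~R.

Definition holder_on01 (gamma : R) (phi : R -> R) : Prop :=
  exists C : R, forall s t : R, 0 <= s <= 1 -> 0 <= t <= 1 ->
    `|phi s - phi t| <= C * (`|s - t| `^ gamma).

Definition psi_of (b : nat) (beta : R) (phi : R -> R) (t : R) : R :=
  limn (series (fun m : nat => beta ^+ m * phi (frac ((b%:R) ^+ m * t)))).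

Variables (d : measure_display) (T : measurableType d) (P : probability T R).

(* U_0, U_1, ... i.i.d. uniform on {0,...,b-1}: each event {U i = k} is
   measurable, each U i is uniform, and the family is mutually independent
   (product rule over every finite family of distinct indices). *)
Definition iid_uniform (b : nat) (U : nat -> T -> nat) : Prop :=
  (forall i k, measurable [set w | U i w = k]) /\
  (forall i k, (k < b)%N -> P [set w | U i w = k] = (b%:R^-1)%:E) /\
  (forall (s : seq nat) (k : nat -> nat), uniq s ->
     P (\bigcap_(i in [set` s]) [set w | U i w = k i]) =
     (\prod_(i <- s) P [set w | U i w = k i])%E).

(* R_m = sum_{i=1}^m U_i b^(i-1), written with 0-indexed U *)
Definition Rm (b : nat) (U : nat -> T -> nat) (m : nat) (w : T) : nat :=
  (\sum_(i < m) U i w * b ^ i)%N.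

Definition Zvar (b : nat) (alpha : R) (phi : R -> R) (U : nat -> T -> nat)
  (w : T) : R :=
  limn (series (fun n : nat =>
    let m := n.+1 in
    alpha ^- m * (phi ((Rm b U m w).+1%:R / (b%:R ^+ m))
                  - phi ((Rm b U m w)%:R / (b%:R ^+ m))))).

Definition valid_base_function (b : nat) (alpha gamma : R) (phi : R -> R)
  (U : nat -> T -> nat) : Prop :=
  holder_on01 gamma phi /\ phi 0 = phi 1 /\
  ~ {ae P, forall w, Zvar b alpha phi U w = 0}.

End Defs.

(* Main.v *)
Require Import Defs.
From HB Require Import structures.
From mathcomp Require Import all_boot all_order all_algebra.
From mathcomp Require Import all_classical all_reals all_analysis.
From mathcomp Require Import ring lra.
Import Order.TTheory GRing.Theory Num.Theory.
Import numFieldNormedType.Exports.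
Local Open Scope classical_set_scope.
Local Open Scope ring_scope.
Set Implicit Arguments. Unset Strict Implicit. Unset Printing Implicit Defensive.

Section H.
Variable R : realType.

Lemma geom_bound (u : R^nat) (c q : R) : 0 <= q < 1 ->
  (forall n, `|u n| <= c * q ^+ n) ->
  cvgn (series u) /\ `|limn (series u)| <= c / (1 - q).
Proof.
move=> /andP[q0 q1] hu.
have aq : `|q| < 1 by rewrite ger0_norm.
have hg := @is_cvg_geometric_series _ c _ aq.
have hn : cvgn [normed series u].
  apply: (series_le_cvg _ _ _ hg) => n //=; rewrite /geometric /=.
  exact: le_trans (hu n).
split; first exact: normed_cvg.
apply: le_trans (lim_series_norm hn) _.
rewrite -(cvg_lim _ (@cvg_geometric_series _ c _ aq)) //.
apply: lim_series_le => // n; by rewrite /geometric /=.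
Qed.

Lemma contract0 (e z : R^nat) (r : R) : 0 < r < 1 ->
  (forall n, e n.+1 = r * e n + z n) -> z @ \oo --> 0 -> e @ \oo --> 0.
Proof.
move=> /andP[r0 r1] he hz.
apply/cvgr0Pnorm_lt => eps eps0.
have e2 : 0 < eps * (1 - r) / 2 by rewrite divr_gt0 // mulr_gt0 // subr_gt0.
have [N0 _ hN0] := cvgr0_norm_lt z hz _ e2.
pose B := `|e N0| / r ^+ N0.
have key : forall k, `|e (N0 + k)%N| <= B * r ^+ (N0 + k) + eps / 2.
  elim=> [|k IH].
    rewrite addn0 /B divfK ?expf_neq0 ?gt_eqF //.
    by rewrite lerDl divr_ge0 // ltW.
  rewrite addnS he.
  apply: le_trans (ler_normD _ _) _.
  have hz' : `|z (N0 + k)%N| <= eps * (1 - r) / 2.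
    by apply/ltW/hN0 => /=; rewrite leq_addr.
  rewrite normrM (ger0_norm (ltW r0)).
  have := ler_wpM2l (ltW r0) IH => h1.
  apply: le_trans (lerD h1 hz') _.
  rewrite exprS; rewrite le_eqVlt; apply/orP; left; apply/eqP; by field.
have ar : `|r| < 1 by rewrite ger0_norm // ltW.
have hg := @cvg_geometric _ B _ ar.
have e3 : 0 < eps / 2 by rewrite divr_gt0.
have [N1 _ hN1] := cvgr0_norm_lt (geometric B r) hg _ e3.
exists (maxn N0 N1) => // n /= hn.
have n0 : (N0 <= n)%N by apply: leq_trans hn; rewrite leq_maxl.
have n1 : (N1 <= n)%N by apply: leq_trans hn; rewrite leq_maxr.
have := key (n - N0)%N; rewrite subnKC //.
have := hN1 n n1; rewrite /geometric /= => h2 h3.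
apply: le_lt_trans h3 _.
have h4 : B * r ^+ n < eps / 2 by apply: le_lt_trans h2; exact: ler_norm.
lra.
Qed.

Lemma conv_cvg (a : R^nat) (r A : R) : 0 < r < 1 ->
  series a @ \oo --> A ->
  series (fun n => \sum_(k < n.+1) r ^+ k * a (n - k)%N) @ \oo --> A / (1 - r).
Proof.
move=> /andP[r0 r1] ha.
set c := fun n => _.
have hc : forall n, c n.+1 = a n.+1 + r * c n.
  move=> n; rewrite /c big_ord_recl /= expr0 mul1r subn0; congr (_ + _).
  rewrite mulr_sumr; apply: eq_bigr => k _.
  by rewrite /bump /= add1n subSS exprS mulrA.
have hS : forall N, series c N.+1 = r * series c N + series a N.+1.
  elim=> [|N IH].
    rewrite !seriesSr /series /= !big_geq // /c big_ord1 mulr0 !add0r expr0 mul1r; by [] || ring.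
  rewrite (seriesSr c N.+1) {1}IH hc (seriesSr a N.+1) (seriesSr c N); ring.
have r1' : 1 - r != 0 by rewrite subr_eq0 gt_eqF.
apply/subr_cvg0.
apply: (@contract0 _ (fun N => series a N.+1 - A) r).
- by rewrite r0 r1.
- move=> n /=; rewrite hS; by field.
- apply/subr_cvg0.
  by rewrite (cvg_shiftS (series a)).
Qed.

Lemma frac_ge0 (x : R) : 0 <= Defs.frac x.
Proof. by rewrite /Defs.frac subr_ge0 floor_le. Qed.

Lemma frac_lt1 (x : R) : Defs.frac x < 1.
Proof. rewrite /Defs.frac; have := floorD1_gt x; rewrite intrD /=; lra. Qed.

Lemma fracDn (x : R) (n : nat) : Defs.frac (x + n%:R) = Defs.frac x.
Proof.
rewrite /Defs.frac floorDrz ?intr_int //.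
have -> : Num.floor (n%:R : R) = n%:Z by rewrite -[X in Num.floor X]/((n%:Z)%:~R) intrKfloor.
by rewrite intrD /=; ring.
Qed.

Lemma frac_id (x : R) : 0 <= x < 1 -> Defs.frac x = x.
Proof.
move=> hx; rewrite /Defs.frac (@floor_def _ x 0) ?subr0 //.
Qed.

Lemma frac_nat (n : nat) : Defs.frac (n%:R : R) = 0.
Proof. by rewrite -[X in Defs.frac X]add0r fracDn frac_id // lexx ltr01. Qed.

Lemma powR_mono (a c g : R) : 0 <= g -> 0 <= a -> a <= c -> a `^ g <= c `^ g.
Proof.
move=> g0 a0 ac; apply: (ge0_ler_powR g0) => //; rewrite nnegrE //.
exact: le_trans ac.
Qed.

Lemma gholder (phi : R -> R) (C g : R) : 0 < g ->
  (forall s t, 0 <= s <= 1 -> 0 <= t <= 1 -> `|phi s - phi t| <= C * `|s - t| `^ g) ->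
  phi 0 = phi 1 -> 0 <= C ->
  forall x y, `|phi (Defs.frac x) - phi (Defs.frac y)| <= 2 * C * `|x - y| `^ g.
Proof.
move=> g0 hphi p01 C0.
have in01 : forall z : R, 0 <= Defs.frac z <= 1.
  by move=> z; rewrite frac_ge0 ltW // frac_lt1.
have hp : forall z : R, 0 <= C * `|z| `^ g by move=> z; rewrite mulr_ge0 // powR_ge0.
move=> x y; wlog xy : x y / x <= y.
  move=> H; have [h|h] := leP x y; first exact: (H x y h).
  by rewrite distrC (distrC x); apply: (H y x); rewrite ltW.
have := le_floor xy; rewrite le_eqVlt => /orP[/eqP e|lt].
  apply: le_trans (hphi _ _ (in01 x) (in01 y)) _.
  have -> : Defs.frac x - Defs.frac y = x - y by rewrite /Defs.frac e; ring.
  have := hp (x - y); lra.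
have h1 : (Num.floor x)%:~R + 1 <= (Num.floor y)%:~R :> R.
  have : (Num.floor x + 1 <= Num.floor y)%R by rewrite lezD1.
  by rewrite -(ler_int R) intrD.
have h2 := floor_le x; have h3 := floor_le y; have h4 := floorD1_gt x.
rewrite intrD /= in h4.
have -> : phi (Defs.frac x) - phi (Defs.frac y) =
  (phi (Defs.frac x) - phi 1) + (phi 0 - phi (Defs.frac y)) by rewrite p01; ring.
apply: le_trans (ler_normD _ _) _.
have i1 : 0 <= (1:R) <= 1 by rewrite ler01 lexx.
have i0 : 0 <= (0:R) <= 1 by rewrite lexx ler01.
have b1 := hphi _ _ (in01 x) i1.
have b2 := hphi _ _ i0 (in01 y).
have e1 : `|x - y| = y - x by rewrite distrC ger0_norm // subr_ge0.
have e2 : `|Defs.frac x - 1| = 1 - Defs.frac x.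
  by rewrite distrC ger0_norm // subr_ge0 ltW // frac_lt1.
have e3 : `|0 - Defs.frac y| = Defs.frac y.
  by rewrite sub0r normrN ger0_norm // frac_ge0.
have c1 : `|Defs.frac x - 1| `^ g <= `|x - y| `^ g.
  apply: powR_mono; [exact: ltW | exact: normr_ge0 | ]; rewrite e1 e2 /Defs.frac; lra.
have c2 : `|0 - Defs.frac y| `^ g <= `|x - y| `^ g.
  apply: powR_mono; [exact: ltW | exact: normr_ge0 | ]; rewrite e1 e3 /Defs.frac; lra.
have d1 := ler_wpM2l C0 c1.
have d2 := ler_wpM2l C0 c2.
lra.
Qed.

Lemma powR_exp (b : R) (k : nat) (g : R) : 0 <= b -> (b ^+ k) `^ g = (b `^ g) ^+ k.
Proof.
move=> b0; rewrite -powR_mulrn // -powRrM mulrC powRrM powR_mulrn //.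
exact: powR_ge0.
Qed.

Lemma holder_C0 (phi : R -> R) (C g : R) : 0 < g ->
  (forall s t, 0 <= s <= 1 -> 0 <= t <= 1 -> `|phi s - phi t| <= C * `|s - t| `^ g) ->
  0 <= C.
Proof.
move=> g0 h; have := h 0 1; rewrite sub0r normrN normr1 powR1 mulr1.
move=> h'; apply: le_trans (h' _ _); first exact: normr_ge0.
  by rewrite lexx ler01.
by rewrite lexx ler01.
Qed.

Lemma holder_bound (phi : R -> R) (C g : R) : 0 < g ->
  (forall s t, 0 <= s <= 1 -> 0 <= t <= 1 -> `|phi s - phi t| <= C * `|s - t| `^ g) ->
  forall y, `|phi (Defs.frac y)| <= `|phi 0| + C.
Proof.
move=> g0 h y.
have C0 := holder_C0 g0 h.
have iy : 0 <= Defs.frac y <= 1 by rewrite frac_ge0 ltW // frac_lt1.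
have := h _ 0 iy; rewrite lexx ler01 subr0 => /(_ isT) h1.
have h2 : `|Defs.frac y| `^ g <= 1 `^ g.
  apply: powR_mono; [exact: ltW|exact: normr_ge0|].
  by rewrite ger0_norm ?frac_ge0 // ltW // frac_lt1.
rewrite powR1 /= in h2.
have h3 := ler_wpM2l C0 h2.
have -> : phi (Defs.frac y) = phi 0 + (phi (Defs.frac y) - phi 0) by ring.
apply: le_trans (ler_normD _ _) _; rewrite lerD2l.
apply: le_trans h1 _; lra.
Qed.

Lemma psi_cvg (phi : R -> R) (C g : R) (b : nat) (beta t : R) : 0 < g ->
  (forall s t, 0 <= s <= 1 -> 0 <= t <= 1 -> `|phi s - phi t| <= C * `|s - t| `^ g) ->
  0 <= beta < 1 ->
  cvgn (series (fun m : nat => beta ^+ m * phi (Defs.frac ((b%:R) ^+ m * t)))).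
Proof.
move=> g0 hC hb.
have := @geom_bound (fun m : nat => beta ^+ m * phi (Defs.frac ((b%:R) ^+ m * t))) (`|phi 0| + C) beta hb.
case; last by move=> h _; exact: h.
move=> n.
rewrite normrM ger0_norm ?exprn_ge0 //; last by case/andP: hb.
rewrite mulrC; apply: ler_wpM2r; first by rewrite exprn_ge0 //; case/andP: hb.
exact: holder_bound g0 hC _.
Qed.

Lemma psi_holder (phi : R -> R) (g : R) (b : nat) (beta : R) : 0 < g ->
  0 <= beta < 1 -> beta * (b%:R) `^ g < 1 ->
  holder_on01 g phi -> phi 0 = phi 1 -> holder_on01 g (psi_of b beta phi).
Proof.
move=> g0 hb hq [C hC] p01.
have C0 := holder_C0 g0 hC.
set q := beta * (b%:R) `^ g.
have q0 : 0 <= q by rewrite mulr_ge0 ?powR_ge0 //; case/andP: hb.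
have hq' : 0 <= q < 1 by rewrite q0 hq.
exists (2 * C / (1 - q)) => s t _ _.
rewrite /psi_of -lim_seriesB.
have := @geom_bound (fun m : nat => beta ^+ m * phi (Defs.frac ((b%:R) ^+ m * s)) -
  beta ^+ m * phi (Defs.frac ((b%:R) ^+ m * t))) (2 * C * `|s - t| `^ g) q hq'.
case.
  move=> n /=; rewrite -mulrBr normrM ger0_norm ?exprn_ge0 //; last by case/andP: hb.
  apply: le_trans (ler_wpM2l _ (gholder g0 hC p01 C0 _ _)) _.
    by rewrite exprn_ge0 //; case/andP: hb.
  rewrite -mulrBr normrM ger0_norm ?exprn_ge0 // powRM ?exprn_ge0 ?normr_ge0 //.
  rewrite powR_exp // /q exprMn; rewrite le_eqVlt; apply/orP; left; apply/eqP; ring.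
move=> _ h; apply: le_trans h _; rewrite le_eqVlt; apply/orP; left; apply/eqP; field.
  by rewrite subr_eq0 gt_eqF.
all: exact: psi_cvg g0 hC hb.
Qed.

Definition RR (b : nat) (v : nat -> nat) (m : nat) : nat := (\sum_(i < m) v i * b ^ i)%N.

Lemma RR_split b v j k : RR b v (j + k) = (RR b v j + b ^ j * \sum_(i < k) v (j + i) * b ^ i)%N.
Proof.
rewrite /RR big_split_ord /=; congr (_ + _)%N.
rewrite big_distrr /=; apply: eq_bigr => i _.
by rewrite expnD mulnCA.
Qed.

Lemma frac_ptA (b : nat) v j k e : (0 < b)%N ->
  Defs.frac ((b%:R : R) ^+ k * ((RR b v (j + k) + e)%:R / (b%:R) ^+ (j + k))) =
  Defs.frac ((RR b v j + e)%:R / (b%:R) ^+ j).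
Proof.
move=> b0; rewrite RR_split.
set N := (\sum_(i < k) _)%N.
have bn0 : (b%:R : R) != 0 by rewrite pnatr_eq0 -lt0n.
have -> : (b%:R : R) ^+ k * ((RR b v j + b ^ j * N + e)%:R / b%:R ^+ (j + k)) =
  (RR b v j + e)%:R / b%:R ^+ j + N%:R.
  rewrite !natrD natrM natrX exprD; field.
  by rewrite !expf_neq0.
by rewrite fracDn.
Qed.

Lemma frac_ptB (b : nat) (X m i : nat) : (0 < b)%N ->
  Defs.frac ((b%:R : R) ^+ (m + i) * (X%:R / (b%:R) ^+ m)) = 0.
Proof.
move=> b0.
have bn0 : (b%:R : R) != 0 by rewrite pnatr_eq0 -lt0n.
have -> : (b%:R : R) ^+ (m + i) * (X%:R / (b%:R) ^+ m) = (X * b ^ i)%N%:R.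
  rewrite natrM natrX exprD; field.
  by rewrite expf_neq0.
exact: frac_nat.
Qed.

Definition EE (phi : R -> R) (b : nat) v (j : nat) : R :=
  phi (Defs.frac ((RR b v j).+1%:R / (b%:R) ^+ j)) -
  phi (Defs.frac ((RR b v j)%:R / (b%:R) ^+ j)).

Lemma psi_diff (phi : R -> R) (C g : R) (b : nat) (beta : R) v m : 0 < g ->
  (forall s t, 0 <= s <= 1 -> 0 <= t <= 1 -> `|phi s - phi t| <= C * `|s - t| `^ g) ->
  0 <= beta < 1 -> (0 < b)%N ->
  psi_of b beta phi ((RR b v m).+1%:R / (b%:R) ^+ m) -
  psi_of b beta phi ((RR b v m)%:R / (b%:R) ^+ m) =
  \sum_(k < m) beta ^+ k * EE phi b v (m - k).
Proof.
move=> g0 hC hb b0.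
rewrite /psi_of -lim_seriesB; last 2 first.
- exact: psi_cvg g0 hC hb.
- exact: psi_cvg g0 hC hb.
apply: lim_near_cst.
  exact: Rhausdorff.
exists m => // N /= hN.
rewrite /series /= (big_cat_nat (leq0n m) hN) /=.
rewrite [X in _ + X]big1_seq ?addr0; last first.
  move=> k /andP[_]; rewrite mem_index_iota => /andP[hk _].
  by rewrite -(subnKC hk) 2!fctE !frac_ptB // subrr.
rewrite big_mkord; apply: eq_bigr => [[k hk]] _ /=.
set j := (m - k)%N.
have hm : m = (j + k)%N by rewrite subnK // ltnW.
clearbody j; subst m.
rewrite 2!fctE /EE -[(RR b v (j + k)).+1]addn1 -[(RR b v j).+1]addn1 frac_ptA //.
have := @frac_ptA b v j k 0 b0; rewrite !addn0 => ->.
by rewrite mulrBr.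
Qed.

Lemma RR_lt b v j : (forall i, (v i < b)%N) -> (RR b v j < b ^ j)%N.
Proof.
move=> hv; elim: j => [|j IH]; first by rewrite /RR big_ord0 expn0.
rewrite /RR big_ord_recr /= -/(RR b v j) expnS.
have h := leq_mul (hv j : (v j).+1 <= b)%N (leqnn (b ^ j)).
rewrite mulSn in h.
apply: leq_trans (_ : (RR b v j + v j * b ^ j < b ^ j + v j * b ^ j)%N) _.
  by rewrite ltn_add2r.
exact: h.
Qed.

Lemma EE_good (phi : R -> R) b v j : (0 < b)%N -> phi 0 = phi 1 ->
  (forall i, (v i < b)%N) ->
  EE phi b v j = phi ((RR b v j).+1%:R / (b%:R) ^+ j) - phi ((RR b v j)%:R / (b%:R) ^+ j).
Proof.
move=> b0 p01 hv.
have hl := RR_lt j hv.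
have bj : (0 : R) < (b%:R) ^+ j by rewrite exprn_gt0 // ltr0n.
rewrite /EE; congr (_ - _); last first.
  congr (phi _); apply: frac_id; rewrite divr_ge0 ?ler0n ?ltW //=.
  by rewrite ltr_pdivrMr // mul1r -natrX ltr_nat.
move: hl; rewrite leq_eqVlt => /orP[/eqP e|hl].
  rewrite e natrX divff ?gt_eqF //.
  by rewrite -[X in Defs.frac X]/(1%:R) frac_nat.
congr (phi _); apply: frac_id; rewrite divr_ge0 ?ler0n ?ltW //=.
by rewrite ltr_pdivrMr // mul1r -natrX ltr_nat.
Qed.

Lemma EE_bound (phi : R -> R) (C g : R) b v j : 0 < g -> (0 < b)%N ->
  (forall s t, 0 <= s <= 1 -> 0 <= t <= 1 -> `|phi s - phi t| <= C * `|s - t| `^ g) ->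
  phi 0 = phi 1 ->
  `|EE phi b v j| <= 2 * C * (((b%:R : R)^-1) `^ g) ^+ j.
Proof.
move=> g0 b0 hC p01.
have C0 := holder_C0 g0 hC.
apply: le_trans (gholder g0 hC p01 C0 _ _) _.
have bj : (0 : R) < (b%:R) ^+ j by rewrite exprn_gt0 // ltr0n.
have -> : (RR b v j).+1%:R / (b%:R : R) ^+ j - (RR b v j)%:R / (b%:R) ^+ j = ((b%:R)^-1) ^+ j.
  rewrite -natr1 exprVn; field; by rewrite gt_eqF.
rewrite ger0_norm ?exprn_ge0 ?invr_ge0 ?ler0n // powR_exp ?invr_ge0 ?ler0n //.
Qed.

Lemma a_bound (phi : R -> R) (C g alpha : R) b v n : 0 < g -> (0 < b)%N -> 0 < alpha ->
  (forall s t, 0 <= s <= 1 -> 0 <= t <= 1 -> `|phi s - phi t| <= C * `|s - t| `^ g) ->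
  phi 0 = phi 1 ->
  `|alpha ^- n.+1 * EE phi b v n.+1| <=
    (2 * C * ((b%:R : R)^-1) `^ g / alpha) * ((((b%:R : R)^-1) `^ g) / alpha) ^+ n.
Proof.
move=> g0 b0 a0 hC p01.
have C0 := holder_C0 g0 hC.
rewrite normrM normrV ?unitfE ?expf_neq0 ?gt_eqF // normrX (ger0_norm (ltW a0)).
set p := ((b%:R : R)^-1) `^ g.
have p0 : 0 <= p by exact: powR_ge0.
have := EE_bound v n.+1 g0 b0 hC p01; rewrite -/p => h.
apply: le_trans (ler_wpM2l _ h) _; first by rewrite invr_ge0 exprn_ge0 // ltW.
rewrite le_eqVlt; apply/orP; left; apply/eqP.
rewrite !exprS exprMn exprVn; field; by rewrite expf_neq0 // gt_eqF.
Qed.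

Lemma Zpsi_term (phi : R -> R) (C g alpha beta : R) b v n : 0 < g ->
  (forall s t, 0 <= s <= 1 -> 0 <= t <= 1 -> `|phi s - phi t| <= C * `|s - t| `^ g) ->
  0 <= beta < 1 -> (0 < b)%N ->
  alpha ^- n.+1 * (psi_of b beta phi ((RR b v n.+1).+1%:R / (b%:R) ^+ n.+1) -
    psi_of b beta phi ((RR b v n.+1)%:R / (b%:R) ^+ n.+1)) =
  \sum_(k < n.+1) (beta / alpha) ^+ k * (alpha ^- (n - k).+1 * EE phi b v (n - k).+1).
Proof.
move=> g0 hC hb b0.
rewrite (psi_diff _ _ g0 hC hb b0) mulr_sumr; apply: eq_bigr => [[k hk]] _ /=.
rewrite subSn //.
set j := (n - k)%N.
have hn : n = (k + j)%N by rewrite subnKC.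
clearbody j; subst n.
rewrite exprMn exprVn -addnS exprD invfM.
set A := alpha ^+ k; set B := alpha ^+ j.+1; set Bt := beta ^+ k.
set E := EE phi b v j.+1.
ring.
Qed.

Lemma Zpsi_cvg (phi : R -> R) (C g alpha beta : R) b v : 0 < g ->
  (forall s t, 0 <= s <= 1 -> 0 <= t <= 1 -> `|phi s - phi t| <= C * `|s - t| `^ g) ->
  phi 0 = phi 1 -> 0 < beta -> beta < 1 -> beta < alpha -> (0 < b)%N ->
  ((b%:R : R)^-1) `^ g < alpha ->
  cvgn (series (fun n => alpha ^- n.+1 * EE phi b v n.+1)) /\
  series (fun n => alpha ^- n.+1 * (psi_of b beta phi ((RR b v n.+1).+1%:R / (b%:R) ^+ n.+1) -
    psi_of b beta phi ((RR b v n.+1)%:R / (b%:R) ^+ n.+1))) @ \oo -->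
  limn (series (fun n => alpha ^- n.+1 * EE phi b v n.+1)) / (1 - beta / alpha).
Proof.
move=> g0 hC p01 be0 be1 ba b0 pa.
have hb : 0 <= beta < 1 by rewrite ltW.
have p0 : 0 <= ((b%:R : R)^-1) `^ g by exact: powR_ge0.
have a0 : 0 < alpha by apply: le_lt_trans pa.
have a1 : alpha <= 1 \/ True by right.
have hq : 0 <= ((b%:R : R)^-1) `^ g / alpha < 1.
  by rewrite divr_ge0 ?(ltW a0) //= ltr_pdivrMr // mul1r.
have [hcv _] := geom_bound hq (fun n => a_bound v n g0 b0 a0 hC p01).
split => //.
have -> : (fun n => alpha ^- n.+1 * (psi_of b beta phi ((RR b v n.+1).+1%:R / (b%:R) ^+ n.+1) -
    psi_of b beta phi ((RR b v n.+1)%:R / (b%:R) ^+ n.+1))) =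
  (fun n => \sum_(k < n.+1) (beta / alpha) ^+ k * (fun i => alpha ^- i.+1 * EE phi b v i.+1) (n - k)%N).
  by apply: funext => n; rewrite (Zpsi_term _ _ _ g0 hC hb b0).
apply: (@conv_cvg (fun i => alpha ^- i.+1 * EE phi b v i.+1) (beta / alpha)).
  by rewrite divr_gt0 //= ltr_pdivrMr // mul1r.
exact: hcv.
Qed.

Lemma ae_good d (T : measurableType d) (P : probability T R) (b : nat) (U : nat -> T -> nat) :
  (0 < b)%N -> iid_uniform P b U -> {ae P, forall w, forall i, (U i w < b)%N}.
Proof.
move=> b0 [hm [hu _]].
pose F i := ~` (\big[setU/set0]_(k < b) [set w | U i w = k]).
apply: (@negligibleS _ _ _ P (\bigcup_i F i)).
  move=> w /= hw; have [i hi] := (existsNP _).2 hw.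
  exists i => // hin; apply: hi.
  have : (\big[setU/set0]_(k < b) [set w0 | U i w0 = k]) w := hin.
  rewrite -(bigcup_mkord b (fun k : nat => [set w0 | U i w0 = k])) => -[k /= hk ->].
  exact: hk.
apply: negligible_bigcup => i.
exists (F i); split => //.
  by apply: measurableC; apply: bigsetU_measurable => k _; exact: hm.
rewrite /F /= probability_setC; last by apply: bigsetU_measurable => k _; exact: hm.
rewrite (@measure_semi_additive_ord_I _ _ _ P (fun k => [set w | U i w = k])).
- rewrite (eq_bigr (fun=> ((b%:R : R)^-1)%:E)); last by move=> k _; rewrite /= hu.
  rewrite sumEFin -(big_mkord xpredT (fun=> (b%:R : R)^-1)) sumr_const_nat subn0.
  by rewrite -[((b%:R : R)^-1 *+ b)]mulr_natr mulVf ?pnatr_eq0 -?lt0n // -EFinB subrr.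
- by move=> k _; exact: hm.
- by move=> k l _ _ [w [/= <- <-]].
- by apply: bigsetU_measurable => k _; exact: hm.
Qed.
End H.

Unset Implicit Arguments.

Theorem propositionA4 (R : realType) (d : measure_display) (T : measurableType d)
  (P : probability T R) (U : nat -> T -> nat) (b : nat) (alpha beta gamma : R)
  (phi : R -> R) :
  (2 <= b)%N ->
  0 < gamma <= 1 ->
  b%:R `^ (- gamma) < alpha -> alpha < 1 ->
  iid_uniform P b U ->
  holder_on01 gamma phi ->
  phi 0 = phi 1 ->
  valid_base_function P b alpha gamma phi U ->
  0 < beta -> beta < b%:R `^ (- gamma) ->
  valid_base_function P b alpha gamma (psi_of b beta phi) U.
Proof.
move=> b2 /andP[g0 g1] ha1 ha2 hiid hhold p01 [_ [_ hnot]] be0 be1.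
have b0 : (0 < b)%N by apply: leq_trans b2.
have bR0 : (0 : R) < b%:R by rewrite ltr0n.
have hpow : ((b%:R : R)^-1) `^ gamma = (b%:R : R) `^ (- gamma).
  rewrite powRN.
  have h : ((b%:R : R)^-1) `^ gamma * (b%:R : R) `^ gamma = 1.
    by rewrite -powRM ?invr_ge0 ?ler0n // mulVf ?gt_eqF // powR1.
  have hn : (b%:R : R) `^ gamma != 0 by rewrite gt_eqF // powR_gt0.
  by apply: (mulIf hn); rewrite h mulVf.
have bal : beta < alpha by apply: lt_trans ha1.
have be1' : beta < 1 by apply: lt_trans ha2.
have hb : 0 <= beta < 1 by rewrite (ltW be0) be1'.
have hq : beta * (b%:R : R) `^ gamma < 1.
  have hp : (0 : R) < (b%:R : R) `^ gamma by rewrite powR_gt0.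
  by move: be1; rewrite powRN -div1r ltr_pdivlMr.
split; first exact: psi_holder g0 hb hq hhold p01.
split.
  have e : (fun m : nat => beta ^+ m * phi (Defs.frac ((b%:R : R) ^+ m * 0))) =
           (fun m : nat => beta ^+ m * phi (Defs.frac ((b%:R : R) ^+ m * 1))).
    apply: funext => m; rewrite mulr0 mulr1 -natrX frac_nat frac_id //.
    by rewrite lexx ltr01.
  by rewrite /psi_of e.
move=> hae; apply: hnot.
have hg := ae_good b0 hiid.
case: hhold => C hC.
apply: (filterS2 _ _ hg hae) => w good hz.
pose v := fun i => U i w.
have pa : ((b%:R : R)^-1) `^ gamma < alpha by rewrite hpow.
have [hcv hconv] := @Zpsi_cvg R phi C gamma alpha beta b v g0 hC p01 be0 be1' bal b0 pa.
have hz' : limn (series (fun n => alpha ^- n.+1 *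
    (psi_of b beta phi ((RR b v n.+1).+1%:R / (b%:R) ^+ n.+1) -
     psi_of b beta phi ((RR b v n.+1)%:R / (b%:R) ^+ n.+1)))) = 0 := hz.
rewrite (cvg_lim _ hconv) in hz'; last exact: Rhausdorff.
have r1 : 1 - beta / alpha != 0.
  rewrite subr_eq0 eq_sym lt_eqF //.
  by rewrite ltr_pdivrMr ?mul1r //; apply: lt_trans ha1; rewrite powR_gt0.
move/eqP: hz'; rewrite mulf_eq0 invr_eq0 (negbTE r1) orbF => /eqP hl.
have e : (fun n => alpha ^- n.+1 * EE phi b v n.+1) =
   (fun n => alpha ^- n.+1 * (phi ((RR b v n.+1).+1%:R / (b%:R) ^+ n.+1) -
     phi ((RR b v n.+1)%:R / (b%:R) ^+ n.+1))).
  by apply: funext => n; rewrite EE_good.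
change (limn (series (fun n => alpha ^- n.+1 * (phi ((RR b v n.+1).+1%:R / (b%:R) ^+ n.+1) -
     phi ((RR b v n.+1)%:R / (b%:R) ^+ n.+1)))) = 0).
by rewrite -e.
Qed.
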